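(* Let $H=P_4$ (the path $1-2-3-4$) and let $G_1,G_2$ be graphs where $G_i$ is $d_i$-regular of order $n_i$ with adjacency eigenvalues $d_i=\lambda_1(A(G_i)),\dots,\lambda_{n_i}(A(G_i))$, $i=1,2$. Let $G=\bigvee_{P_4}\{G_1,G_2,G_2',G_1'\}$, where $G_1'$, $G_2'$ are disjoint copies of $G_1$, $G_2$ assigned to vertices $4$ and $3$ respectively, and let $s\in\mathbb{R}$. Set $$a(s)=s^2(d_1+n_2-1)-sd_1+1,\qquad b(s)=s^2(d_2+(n_1+n_2)-1)-sd_2+1,$$ $\sigma(M_1(s))=\{s^2(d_1+n_2-1)-s\lambda_k(A(G_1))+1\}_{k=1}^{n_1}$ and $\sigma(M_2(s))=\{s^2(d_2+n_1+n_2-1)-s\lambda_k(A(G_2))+1\}_{k=1}^{n_2}$. Then $$\sigma(M_G(s))=\big(\sigma(M_1(s))^{[2]}-\{a(s)^{[2]}\}\big)\cup\big(\sigma(M_2(s))^{[2]}-\{b(s)^{[2]}\}\big)\cup\sigma(F_4(s)),$$ where $X^{[2]}$ denotes the multiset $X$ with every multiplicity doubled, $\{a(s)^{[2]}\}$ denotes two copies of $a(s)$, and $$\sigma(F_4(s))=\Big\{\tfrac12\big(a(s)+b(s)+sn_2\pm\sqrt{(a(s)-b(s)-sn_2)^2+4s^2n_1n_2}\big),\ \tfrac12\big(a(s)+b(s)-sn_2\pm\sqrt{(a(s)-b(s)+sn_2)^2+4s^2n_1n_2}\big)\Big\}.$$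
   Context: For a simple undirected graph $G$ with adjacency matrix $A$, degree matrix $D$ and identity $I$, and real $s$, the deformed Laplacian matrix is $M_G(s)=I-sA+s^2(D-I)$; $\sigma(\cdot)$ is the multiset of eigenvalues. $H$-join: given a graph $H$ on vertex set $\{1,\dots,r\}$ and pairwise vertex-disjoint graphs $G_1,\dots,G_r$, $\bigvee_H\{G_i\}$ has vertex set $\bigcup_iV(G_i)$ and edges $\bigcup_iE(G_i)$ together with all edges $uv$, $u\in V(G_i)$, $v\in V(G_j)$, for each $ij\in E(H)$. *)

(* Defs.v *)
From HB Require Import structures.
From mathcomp Require Import all_boot all_order all_algebra.
Set Implicit Arguments.
Unset Strict Implicit.
Unset Printing Implicit Defensive.
Import Order.TTheory GRing.Theory Num.Theory.
Local Open Scope ring_scope.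

Definition simple_graph (T : finType) (e : rel T) : Prop :=
  symmetric e /\ irreflexive e.

Definition deg (T : finType) (e : rel T) (v : T) : nat := #|[set u | e v u]|.

Definition regular (T : finType) (e : rel T) (d : nat) : Prop :=
  forall v, deg e v = d.

Definition adjmx (R : nzRingType) (T : finType) (e : rel T) : 'M[R]_#|T| :=
  \matrix_(i, j) (e (enum_val i) (enum_val j))%:R.

Definition degmx (R : nzRingType) (T : finType) (e : rel T) : 'M[R]_#|T| :=
  diag_mx (\row_i (deg e (enum_val i))%:R).

Definition deformed_laplacian (R : comNzRingType) (T : finType) (e : rel T) (s : R)
  : 'M[R]_#|T| :=
  1%:M - s *: adjmx R e + s ^+ 2 *: (degmx R e - 1%:M).

(* sigma(A) = l as multisets: l lists the eigenvalues of A with algebraic multiplicity. *)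
Definition spectrum_is (R : comNzRingType) (n : nat) (A : 'M[R]_n) (l : seq R) : Prop :=
  char_poly A = \prod_(x <- l) ('X - x%:P).

(* H-join: vertex set V partitioned by part : V -> 'I_r; e is the disjoint union of the
   graphs G_i (edges only inside parts); add all edges between parts i, j with ij in E(H). *)
Definition hjoin (r : nat) (H : rel 'I_r) (V : finType) (part : V -> 'I_r) (e : rel V)
  : rel V :=
  fun u v => ((part u == part v) && e u v) || H (part u) (part v).

Definition path_graph (n : nat) : rel 'I_n :=
  fun i j => (i.+1 == j :> nat) || (j.+1 == i :> nat).

Definition sum_rel (T1 T2 : finType) (e1 : rel T1) (e2 : rel T2) : rel (T1 + T2)%type :=
  fun u v => match u, v with
             | inl a, inl b => e1 a b
             | inr a, inr b => e2 a b
             | _, _ => false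
             end.

(* Vertex set of the P_4-join of {G1, G2, G2', G1'} : parts 0,1,2,3 in this order. *)
Definition P4_vert (V1 V2 : finType) : finType := (((V1 + V2) + V2) + V1)%type.

Definition P4_part (V1 V2 : finType) (x : P4_vert V1 V2) : 'I_4 :=
  match x with
  | inl (inl (inl _)) => inord 0
  | inl (inl (inr _)) => inord 1
  | inl (inr _) => inord 2
  | inr _ => inord 3
  end.

Definition P4_join (V1 V2 : finType) (G1 : rel V1) (G2 : rel V2) : rel (P4_vert V1 V2) :=
  hjoin (@path_graph 4) (@P4_part V1 V2) (sum_rel (sum_rel (sum_rel G1 G2) G2) G1).

(* Main.v *)
Require Import Defs.
From HB Require Import structures.
From mathcomp Require Import all_boot all_order all_algebra.
From mathcomp Require Import ring.
From mathcomp Require Import fingroup perm.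
Set Implicit Arguments. Unset Strict Implicit. Unset Printing Implicit Defensive.
Import Order.TTheory GRing.Theory Num.Theory.
Local Open Scope ring_scope.

Section Gen.
Variable R : fieldType.

Definition mxT (T : finType) (F : T -> T -> R) : 'M[R]_#|T| :=
  \matrix_(i, j) F (enum_val i) (enum_val j).
Definition charT (T : finType) (F : T -> T -> R) := char_poly (mxT F).

Lemma char_conj n (A P Q : 'M[R]_n) : Q *m P = 1%:M ->
  char_poly (Q *m A *m P) = char_poly A.
Proof.
move=> QP; have PQ := mulmx1C QP.
have QP' : map_mx (@polyC R) Q *m map_mx polyC P = 1%:M by rewrite -map_mxM QP map_mx1.
have PQ' : map_mx (@polyC R) P *m map_mx polyC Q = 1%:M by rewrite -map_mxM PQ map_mx1.
rewrite /char_poly /char_poly_mx.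
have -> : 'X%:M - map_mx polyC (Q *m A *m P) =
   map_mx polyC Q *m ('X%:M - map_mx polyC A) *m map_mx polyC P.
  rewrite mulmxBr mulmxBl !map_mxM mul_mx_scalar -scalemxAl QP'.
  by rewrite scalemx1.
rewrite !det_mulmx mulrC mulrA -det_mulmx PQ' det1 mul1r //.
Qed.

Lemma char_perm n (s : 'S_n) (A : 'M[R]_n) :
  char_poly (\matrix_(i, j) A (s i) (s j)) = char_poly A.
Proof.
have -> : \matrix_(i, j) A (s i) (s j) = perm_mx s *m A *m perm_mx s^-1.
  by rewrite -row_permE -col_permE; apply/matrixP => i j; rewrite !mxE.
by apply: char_conj; rewrite -perm_mxM mulgV perm_mx1.
Qed.

Lemma char_cast n m (e : n = m) (A : 'M[R]_n) :
  char_poly (castmx (e, e) A) = char_poly A.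
Proof. by case: m / e; rewrite castmx_id. Qed.

Lemma charT_ord (T : finType) n (g : 'I_n -> T) : bijective g ->
  forall F, char_poly (\matrix_(i, j) F (g i) (g j)) = charT F.
Proof.
move=> gb F.
have e : n = #|T| by rewrite -(card_ord n); apply: bij_eq_card gb.
rewrite -(char_cast e).
pose f := fun i : 'I_#|T| => enum_rank (g (cast_ord (esym e) i)).
have finj : injective f.
  move=> i j /enum_rank_inj /(bij_inj gb); exact: cast_ord_inj.
rewrite /charT -[RHS](char_perm (perm finj)); congr char_poly.
by apply/matrixP => i j; rewrite castmxE !mxE !permE /f !enum_rankK.
Qed.

Lemma charT_bij (T U : finType) (h : U -> T) : bijective h ->
  forall F, charT (fun u v => F (h u) (h v)) = charT F.
Proof.
move=> hb F; rewrite /charT /mxT.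
apply: (charT_ord (g := fun i => h (enum_val i))).
apply: bij_comp => //; exact: enum_val_bij.
Qed.

Lemma char_ublock n1 n2 (A : 'M[R]_n1) B (D : 'M[R]_n2) :
  char_poly (block_mx A B 0 D) = char_poly A * char_poly D.
Proof.
rewrite /char_poly /char_poly_mx map_block_mx map_mx0 scalar_mx_block.
by rewrite opp_block_mx add_block_mx oppr0 addr0 det_ublock.
Qed.

Lemma charT_sum (T1 T2 : finType) (F : T1 + T2 -> T1 + T2 -> R) :
  (forall x y, F (inr x) (inl y) = 0) ->
  charT F = charT (fun x y => F (inl x) (inl y)) * charT (fun x y => F (inr x) (inr y)).
Proof.
move=> F0.
pose g (i : 'I_(#|T1| + #|T2|)) : T1 + T2 :=
  match split i with inl a => inl (enum_val a) | inr b => inr (enum_val b) end.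
pose gi (x : T1 + T2) : 'I_(#|T1| + #|T2|) :=
  match x with inl a => lshift _ (enum_rank a) | inr b => rshift _ (enum_rank b) end.
have gb : bijective g.
  exists gi.
    move=> i; rewrite /g; have := splitK i; case: (split i) => a /= <-;
    by rewrite enum_valK.
  case=> a; rewrite /g /gi.
    by rewrite (unsplitK (inl _)) enum_rankK.
  by rewrite (unsplitK (inr _)) enum_rankK.
rewrite -(charT_ord gb F).
have -> : \matrix_(i, j) F (g i) (g j) = block_mx (mxT (fun x y => F (inl x) (inl y)))
   (\matrix_(i, j) F (inl (enum_val i)) (inr (enum_val j))) 0
   (mxT (fun x y => F (inr x) (inr y))).
  apply/matrixP => i j; rewrite -[i]splitK -[j]splitK /g.
  case: (split i) => a; case: (split j) => b /=;
   rewrite ?block_mxEul ?block_mxEur ?block_mxEdl ?block_mxEdr !mxE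
     ?(unsplitK (inl _)) ?(unsplitK (inr _)) //.
  idtac.
by rewrite char_ublock.
Qed.


Definition mulT (T : finType) (F G : T -> T -> R) := fun x y => \sum_z F x z * G z y.
Definition deltaT (T : finType) := fun x y : T => ((x == y)%:R : R).

Lemma sum_enum (T : finType) (f : T -> R) : \sum_(i < #|T|) f (enum_val i) = \sum_z f z.
Proof. by rewrite -(big_enum_val (A := T)); apply: eq_bigl => z; rewrite inE. Qed.

Lemma mxT_mul (T : finType) (F G : T -> T -> R) : mxT (mulT F G) = mxT F *m mxT G.
Proof.
apply/matrixP => i j; rewrite !mxE /mulT -sum_enum; apply: eq_bigr => k _.
by rewrite !mxE.
Qed.

Lemma mxT_delta (T : finType) : mxT (@deltaT T) = 1%:M.
Proof.
by apply/matrixP => i j; rewrite !mxE /deltaT (inj_eq enum_val_inj).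
Qed.

Lemma charT_sim (T : finType) (M P Pi N : T -> T -> R) :
  (forall x y, mulT M P x y = mulT P N x y) ->
  (forall x y, mulT Pi P x y = deltaT x y) -> charT M = charT N.
Proof.
move=> MP0 PiP0.
have MP : mxT (mulT M P) = mxT (mulT P N) by apply/matrixP => i j; rewrite !mxE MP0.
have PiP' : mxT Pi *m mxT P = 1%:M.
  by rewrite -mxT_mul -mxT_delta; apply/matrixP => i j; rewrite !mxE PiP0.
rewrite /charT; have -> : mxT N = mxT Pi *m mxT M *m mxT P.
  by rewrite -mulmxA -mxT_mul MP mxT_mul mulmxA PiP' mul1mx.
by rewrite char_conj.
Qed.


Lemma sum_delta_l (U : finType) (u : U) (f : U -> R) : \sum_z deltaT u z * f z = f u.
Proof.
rewrite (bigD1 u) //= /deltaT eqxx mul1r big1 ?addr0 // => z /negbTE.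
by rewrite eq_sym => ->; rewrite mul0r.
Qed.

Lemma sum_delta_r (U : finType) (v : U) (f : U -> R) : \sum_z f z * deltaT z v = f v.
Proof.
rewrite (bigD1 v) //= /deltaT eqxx mulr1 big1 ?addr0 // => z /negbTE ->.
by rewrite mulr0.
Qed.

Section EP.
Variables (T W : finType) (k : nat) (p : T -> 'I_k) (h : 'I_k + W -> T).
Hypothesis hb : bijective h.
Hypothesis hp : forall j, p (h (inl j)) = j.
Variables (F : T -> T -> R) (Q : 'I_k -> 'I_k -> R).
Hypothesis hQ : forall x j, \sum_(z | p z == j) F x z = Q (p x) j.

Let G u v := F (h u) (h v).
Let K (u v : 'I_k + W) : R :=
  match u, v with inr w, inl j => deltaT (p (h (inr w))) j | _, _ => 0 end.
Let P u v := deltaT u v + K u v.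
Let Pi u v := deltaT u v - K u v.
Let N (u v : 'I_k + W) : R := match u, v with
  | inl i, inl j => Q i j
  | inl i, inr w' => G (inl i) (inr w')
  | inr w, inl j => 0
  | inr w, inr w' => G (inr w) (inr w') - G (inl (p (h (inr w)))) (inr w') end.

Lemma sumG u j : \sum_z G u z * deltaT (p (h z)) j = Q (p (h u)) j.
Proof.
rewrite -hQ /G [RHS](reindex h) /=; last by apply: onW_bij.
rewrite [RHS]big_mkcond /=; apply: eq_bigr => z _.
by rewrite /deltaT; case: eqP => _; rewrite ?mulr1 ?mulr0.
Qed.

Lemma MP u v : mulT G P u v = mulT P N u v.
Proof.
rewrite /mulT /P.
under eq_bigr do rewrite mulrDr.
under [RHS]eq_bigr do rewrite mulrDl.
rewrite !big_split /= sum_delta_r sum_delta_l.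
case: v => [j|w'].
  have -> : G u (inl j) + \sum_z G u z * K z (inl j) = Q (p (h u)) j.
    rewrite -sumG big_sumType [RHS]big_sumType /=.
    rewrite [X in _ + (X + _)]big1 ?add0r; last by move=> i _; rewrite mulr0.
    congr (_ + _); rewrite -(sum_delta_r j (fun i : 'I_k => G u (inl i))).
    by apply: eq_bigr => i _; rewrite hp.
  case: u => [i|w]; rewrite /=.
    by rewrite hp big1 ?addr0 // => z _; rewrite mul0r.
  rewrite big_sumType /= add0r sum_delta_l big1 ?addr0 // => z _.
  by rewrite mul0r.
rewrite big1 ?addr0; last by case=> z _; rewrite mulr0.
case: u => [i|w]; rewrite /=.
  by rewrite big1 ?addr0 // => z _; rewrite mul0r.
rewrite big_sumType /= sum_delta_l big1 ?addr0; last by move=> z _; rewrite mul0r.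
by rewrite subrK.
Qed.

Lemma PiP u v : mulT Pi P u v = deltaT u v.
Proof.
rewrite /mulT /Pi.
under eq_bigr do rewrite mulrBl.
rewrite sumrB sum_delta_l /P.
case: u => [i|w] /=.
  by rewrite big1 ?subr0 ?addr0 // => z _; rewrite mul0r.
rewrite big_sumType /= sum_delta_l big1 ?addr0; last by move=> z _; rewrite mul0r.
case: v => [j|w'] /=; rewrite /deltaT /= ?subr0 ?addr0 ?subrr //.
by rewrite addrK.
Qed.

Lemma N0 x y : N (inr x) (inl y) = 0. Proof. by []. Qed.

Lemma EP_char : charT F = char_poly (\matrix_(i, j) Q i j) *
  charT (fun w w' => F (h (inr w)) (h (inr w')) - F (h (inl (p (h (inr w))))) (h (inr w'))).
Proof.
rewrite -(charT_bij hb F) (@charT_sim _ _ P Pi N MP PiP) (charT_sum N0).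
congr (_ * _).
by rewrite -(@charT_ord _ _ id) //; exists id.
Qed.

End EP.


Lemma prod_seq_scale (l : seq R) (a : {poly R}) (f : R -> {poly R}) :
  \prod_(m <- l) (a * f m) = a ^+ size l * \prod_(m <- l) f m.
Proof.
elim: l => [|x l IH]; first by rewrite !big_nil mul1r.
by rewrite !big_cons IH /= exprS; ring.
Qed.

Lemma char_scale n (B : 'M[R]_n) (l : seq R) c s :
  char_poly B = \prod_(m <- l) ('X - m%:P) ->
  char_poly (c%:M - s *: B) = \prod_(m <- l) ('X - (c - s * m)%:P).
Proof.
move=> hB.
have hs : size l = n.
  by apply: succn_inj; rewrite -(size_char_poly B) hB size_prod_XsubC.
case: (eqVneq s 0) => [->|s0].
  rewrite scale0r subr0 char_poly_trig ?scalar_mx_is_trig //.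
  have -> : \prod_(i < n) ('X - (c%:M i i)%:P) = \prod_(i < n) ('X - c%:P) by apply: eq_bigr => i _; rewrite mxE eqxx mulr1n.
  under [RHS]eq_bigr do rewrite mul0r subr0.
  rewrite prodr_const card_ord -hs.
  elim: l {hB hs} => [|x l IH]; first by rewrite big_nil.
  by rewrite big_cons -IH /= exprS.
pose u : {poly R} := (c%:P - 'X) * (s^-1)%:P.
have e : forall x : {poly R}, - s%:P * (x * s^-1%:P) = - x.
  move=> x; rewrite mulrC -mulrA -polyCN -polyCM mulrN mulVf // polyCN polyC1.
  by rewrite mulrN1.
have cfu : commr_rmorph (@polyC R) u by move=> a; apply: mulrC.
rewrite /char_poly.
have -> : char_poly_mx (c%:M - s *: B) = (- s%:P) *: (u%:M - map_mx polyC B).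
  apply/matrixP => i j; rewrite !mxE.
  case: eqP => _ /=; rewrite ?mulr1n ?mulr0n.
    rewrite mulrBr e /u polyCB polyCM; ring.
  by rewrite !sub0r polyCN polyCM; ring.
rewrite detZ.
have -> : u%:M - map_mx polyC B = map_mx (horner_morph cfu) (char_poly_mx B).
  apply/matrixP => i j; rewrite !mxE rmorphB /= rmorphMn /= horner_morphX.
  by rewrite horner_morphC.
rewrite det_map_mx -/(char_poly B) hB rmorph_prod.
rewrite -hs -prod_seq_scale; apply: eq_bigr => m _.
rewrite rmorphB /= horner_morphX horner_morphC mulrBr e /u polyCB polyCM.
ring.
Qed.

End Gen.

Lemma minor_f (R : comNzRingType) n (f : nat -> nat -> R) (i0 j0 : 'I_n.+1) :
  row' i0 (col' j0 (\matrix_(i < n.+1, j < n.+1) f i j)) =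
  \matrix_(i < n, j < n) f (bump i0 i) (bump j0 j).
Proof. by apply/matrixP => i j; rewrite !mxE. Qed.

Lemma det2f (R : comNzRingType) (f : nat -> nat -> R) :
  \det (\matrix_(i < 2, j < 2) f i j) = f 0 0 * f 1 1 - f 0 1 * f 1 0.
Proof.
rewrite (expand_det_row _ 0) !big_ord_recr big_ord0 /= add0r.
rewrite /cofactor !minor_f !det_mx11 !mxE /=.
ring.
Qed.

Lemma det3f (R : comNzRingType) (f : nat -> nat -> R) :
  \det (\matrix_(i < 3, j < 3) f i j) =
  f 0 0 * (f 1 1 * f 2 2 - f 1 2 * f 2 1)
  - f 0 1 * (f 1 0 * f 2 2 - f 1 2 * f 2 0)
  + f 0 2 * (f 1 0 * f 2 1 - f 1 1 * f 2 0).
Proof.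
rewrite (expand_det_row _ 0) !big_ord_recr big_ord0 /= add0r.
rewrite /cofactor !minor_f.
do 3 rewrite (det2f (fun a b => f (bump _ a) (bump _ b))).
rewrite !mxE /=.
ring.
Qed.

Section S.
Variable R : comNzRingType.
Definition q4 (a b c1 c2 : R) (i j : nat) : R :=
  match i, j with
  | 0, 0 => a | 0, 1 => c2 | 1, 0 => c1 | 1, 1 => b | 1, 2 => c2
  | 2, 1 => c2 | 2, 2 => b | 2, 3 => c1 | 3, 2 => c2 | 3, 3 => a | _, _ => 0 end.

Lemma char44 a b c1 c2 :
  char_poly (\matrix_(i < 4, j < 4) q4 a b c1 c2 i j) =
  ('X^2 - (a + b + c2)%:P * 'X + (a * (b + c2) - c1 * c2)%:P) *
  ('X^2 - (a + b - c2)%:P * 'X + (a * (b - c2) - c1 * c2)%:P).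
Proof.
rewrite /char_poly.
pose g (i j : nat) := 'X *+ (i == j)%N - (q4 a b c1 c2 i j)%:P.
have -> : char_poly_mx (\matrix_(i < 4, j < 4) q4 a b c1 c2 i j) =
  \matrix_(i < 4, j < 4) g i j.
  by apply/matrixP => i j; rewrite !mxE.
rewrite (expand_det_row _ 0) !big_ord_recr big_ord0 /= add0r.
rewrite /cofactor !minor_f.
do 4 rewrite (det3f (fun a b => g (bump _ a) (bump _ b))).
rewrite !mxE /g /=.
rewrite !(polyCD, polyCM, polyCN, polyCB, polyC0).
ring.
Qed.
End S.


Lemma sum_nat_R (R : nzRingType) (T : finType) (P : pred T) :
  \sum_z ((P z)%:R : R) = #|P|%:R.
Proof.
rewrite -sum1_card natr_sum [RHS]big_mkcond /=; apply: eq_bigr => z _.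
by rewrite unfold_in; case: (P z).
Qed.

Lemma deg_sum (R : nzRingType) (T : finType) (e : rel T) x :
  ((deg e x)%:R : R) = \sum_z (e x z)%:R.
Proof.
rewrite sum_nat_R /deg; congr (_%:R).
by apply: eq_card => u; rewrite inE.
Qed.

Lemma single (R : fieldType) (V : finType) (G : rel V) d (r : V) : regular G d ->
  charT (fun x y : V => ((G x y)%:R : R)) = ('X - (d%:R)%:P) *
  charT (fun w w' : {x : V | x != r} => ((G (val w) (val w'))%:R : R) - (G r (val w'))%:R).
Proof.
move=> reg.
pose h (u : 'I_1 + {x : V | x != r}) : V := match u with inl _ => r | inr w => val w end.
have hb : bijective h.
  exists (fun x : V => (if insub x is Some w then inr w else inl ord0) : 'I_1 + {x : V | x != r}).
    case=> [j|w] /=; last by rewrite valK.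
    by rewrite insubF ?(ord1 j) // eqxx.
  move=> x; case: insubP => [w _ <-|] //=.
  by move/negPn/eqP.
pose p := fun _ : V => (ord0 : 'I_1).
have hp : forall j, p (h (inl j)) = j by move=> j; rewrite (ord1 j).
have hQ : forall x j, \sum_(z | p z == j) ((G x z)%:R : R) =
      (fun _ _ => (d%:R : R)) (p x) j.
  move=> x j; rewrite (ord1 j) /=.
  under eq_bigl do rewrite eqxx.
  by rewrite -deg_sum reg.
rewrite (@EP_char R V _ 1 p h hb hp (fun x y => (G x y)%:R) (fun _ _ => d%:R) hQ).
by rewrite /char_poly det_mx11 !mxE.
Qed.

Lemma charT_ext (R : fieldType) (T : finType) (F G : T -> T -> R) :
  (forall x y, F x y = G x y) -> charT F = charT G.
Proof. by move=> FG; rewrite /charT /mxT; congr char_poly; apply/matrixP => i j; rewrite !mxE FG. Qed.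

Lemma block_char (R : fieldType) (V : finType) (G : rel V) d (r : V) (l : seq R) c s :
  regular G d ->
  charT (fun x y : V => ((G x y)%:R : R)) = \prod_(m <- d%:R :: l) ('X - m%:P) ->
  charT (fun w w' : {x : V | x != r} => ((w == w') : nat)%:R * c -
           s * ((G (val w) (val w'))%:R - (G r (val w'))%:R)) =
  \prod_(m <- l) ('X - (c - s * m)%:P).
Proof.
move=> reg hA.
have hB : charT (fun w w' : {x : V | x != r} => ((G (val w) (val w'))%:R : R) - (G r (val w'))%:R)
    = \prod_(m <- l) ('X - m%:P).
  apply: (mulfI (monic_neq0 (monicXsubC (d%:R : R)))).
  by rewrite -(single _ r reg) hA big_cons.
rewrite /charT -(char_scale c s hB); congr char_poly.
apply/matrixP => i j; rewrite !mxE (inj_eq enum_val_inj).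
by case: eqP => _ /=; rewrite ?mulr1n ?mulr0n; ring.
Qed.


Section Big.
Variables (R : fieldType) (V1 V2 : finType) (G1 : rel V1) (G2 : rel V2) (d1 d2 : nat) (s : R).
Hypotheses (reg1 : regular G1 d1) (reg2 : regular G2 d2).
Variables (r1 : V1) (r2 : V2).

Local Notation T := (P4_vert V1 V2).
Local Notation E := (P4_join G1 G2).
Local Notation p := (@P4_part V1 V2).
Local Notation e0 := (sum_rel (sum_rel (sum_rel G1 G2) G2) G1).
Local Notation H := (@path_graph 4).

Lemma inlE (A B : eqType) (a b : A) : (@inl A B a == inl b) = (a == b). Proof. by []. Qed.
Lemma inrE (A B : eqType) (a b : B) : (@inr A B a == inr b) = (a == b). Proof. by []. Qed.
Lemma svalE (V : eqType) (P : pred V) (w w' : {x | P x}) : (sval w == sval w') = (w == w').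
Proof. by []. Qed.

Definition pn (x : T) : nat := p x.

Lemma pn1 x : pn (inl (inl (inl x))) = 0%N. Proof. by rewrite /pn /= inordK. Qed.
Lemma pn2 x : pn (inl (inl (inr x))) = 1%N. Proof. by rewrite /pn /= inordK. Qed.
Lemma pn3 x : pn (inl (inr x)) = 2%N. Proof. by rewrite /pn /= inordK. Qed.
Lemma pn4 x : pn (inr x) = 3%N. Proof. by rewrite /pn /= inordK. Qed.

Lemma E_eq x y : E x y = ((pn x == pn y) && e0 x y) || ((pn x).+1 == pn y) || ((pn y).+1 == pn x).
Proof. by rewrite /P4_join /hjoin /path_graph /pn val_eqE orbA. Qed.

Lemma E_same x y : pn x = pn y -> E x y = e0 x y.
Proof.
have h n : (n.+1 == n) = false by elim: n.
by rewrite E_eq => ->; rewrite eqxx h /= !orbF.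
Qed.

Lemma e0_part x z : e0 x z -> p x = p z.
Proof. by move: x z => [[[x|x]|x]|x] [[[z|z]|z]|z]. Qed.

Lemma H_irr i : H i i = false.
Proof. by rewrite /path_graph orbb eqn_leq ltnn. Qed.

Lemma sum_part_E x j : \sum_(z | p z == j) ((E x z)%:R : R) =
  if p x == j then \sum_z (e0 x z)%:R else (H (p x) j)%:R * \sum_z (((p z == j) : nat)%:R).
Proof.
case: eqP => [<-|/eqP ne].
  rewrite [RHS](bigID (fun z => p z == p x)) /= [X in _ = _ + X]big1 ?addr0.
    apply: eq_bigr => z /eqP pz.
    by rewrite /P4_join /hjoin pz eqxx /= H_irr orbF.
  move=> z /negP pz; case ez: (e0 x z) => //.
  by case: pz; rewrite (e0_part ez).
rewrite big_mkcond /= mulr_sumr; apply: eq_bigr => z _.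
case: eqP => [pz|]; rewrite ?mulr1 ?mulr0 //.
by rewrite /P4_join /hjoin pz (negbTE ne) /=.
Qed.

Lemma sum_part_delta x j : \sum_(z | p z == j) (((x == z) : nat)%:R : R) = ((p x == j) : nat)%:R.
Proof.
rewrite big_mkcond /= (bigD1 x) //= eqxx big1 ?addr0; first by case: (p x == j).
by move=> z /negbTE; rewrite eq_sym => ->; case: ifP.
Qed.


Definition dP (i : 'I_4) : nat := match nat_of_ord i with 0 => d1 | 1 => d2 | 2 => d2 | _ => d1 end.
Definition cP (i : 'I_4) : nat := match nat_of_ord i with 0 => #|V1| | 1 => #|V2| | 2 => #|V2| | _ => #|V1| end.

Lemma sum_false (X : finType) : \sum_(z : X) ((false : nat)%:R : R) = 0.
Proof. by rewrite big1. Qed.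

Lemma sum_true (X : finType) : \sum_(z : X) ((true : nat)%:R : R) = #|X|%:R.
Proof. by rewrite (sum_nat_R _ (@predT X)) cardT -cardE. Qed.

Lemma own x : \sum_z ((e0 x z)%:R : R) = (dP (p x))%:R.
Proof.
move: x => [[[x|x]|x]|x]; rewrite !big_sumType /= !sum_false /dP /= inordK //
  ?add0r ?addr0 -deg_sum ?reg1 ?reg2 //.
Qed.

Lemma cnt j : \sum_z ((((p z == j) : bool) : nat)%:R : R) = (cP j)%:R.
Proof.
case: j => [[|[|[|[|m]]]] hj] //; rewrite !big_sumType /= -!val_eqE /= !inordK //=
  ?sum_false ?sum_true ?add0r ?addr0 //.
Qed.


Lemma degE x : ((deg E x)%:R : R) =
  (dP (p x))%:R + \sum_(j < 4) (H (p x) j)%:R * (cP j)%:R.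
Proof.
rewrite deg_sum (partition_big p predT) //=.
under eq_bigr => j _ do rewrite sum_part_E own cnt.
rewrite (bigD1 (p x)) //= eqxx [in RHS](bigD1 (p x)) //= H_irr mul0r add0r.
congr (_ + _); apply: eq_bigr => j /negbTE.
by rewrite eq_sym => ->.
Qed.

Definition alpha (i : 'I_4) : R :=
  1 + s ^+ 2 * ((dP i)%:R + \sum_(j < 4) (H i j)%:R * (cP j)%:R - 1).

Definition FF (x z : T) : R := ((x == z) : nat)%:R * alpha (p x) - s * (E x z)%:R.

Lemma DL : deformed_laplacian E s = mxT FF.
Proof.
apply/matrixP => i j; rewrite !mxE /FF /alpha -degE (inj_eq enum_val_inj).
by case: eqP => _ /=; ring.
Qed.

Definition Qf (i j : 'I_4) : R :=
  ((i == j) : nat)%:R * alpha i - s * (if i == j then (dP i)%:R else (H i j)%:R * (cP j)%:R).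

Lemma Fsum x j : \sum_(z | p z == j) FF x z = Qf (p x) j.
Proof.
rewrite /FF sumrB -mulr_suml -mulr_sumr sum_part_delta sum_part_E own cnt /Qf.
by [].
Qed.


Definition W := (((({x : V1 | x != r1}) + {x : V2 | x != r2}) + {x : V2 | x != r2})
   + {x : V1 | x != r1})%type.

Definition hh (u : 'I_4 + W) : T :=
  match u with
  | inl j => match nat_of_ord j with
             | 0 => inl (inl (inl r1)) | 1 => inl (inl (inr r2))
             | 2 => inl (inr r2) | _ => inr r1 end
  | inr (inl (inl (inl w))) => inl (inl (inl (val w)))
  | inr (inl (inl (inr w))) => inl (inl (inr (val w)))
  | inr (inl (inr w)) => inl (inr (val w))
  | inr (inr w) => inr (val w)
  end.

Definition hinv (x : T) : 'I_4 + W :=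
  match x with
  | inl (inl (inl y)) => if insub y is Some w then inr (inl (inl (inl w))) else inl (inord 0)
  | inl (inl (inr y)) => if insub y is Some w then inr (inl (inl (inr w))) else inl (inord 1)
  | inl (inr y) => if insub y is Some w then inr (inl (inr w)) else inl (inord 2)
  | inr y => if insub y is Some w then inr (inr w) else inl (inord 3)
  end.

Lemma hb : bijective hh.
Proof.
exists hinv.
  case=> [j|[[[w|w]|w]|w]] /=; try by rewrite valK.
  case: j => [[|[|[|[|m]]]] hj] //=; rewrite insubF ?eqxx //;
    congr inl; apply: val_inj; rewrite /= inordK //.
move=> x; case: x => [[[y|y]|y]|y] /=; case: insubP => [w _ <-|/negPn/eqP ->] //=;
  rewrite inordK //.
Qed.

Lemma hp j : p (hh (inl j)) = j.
Proof.
case: j => [[|[|[|[|m]]]] hj] //=; apply: val_inj; rewrite /= inordK //.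
Qed.


Definition DD (w w' : W) : R :=
  FF (hh (inr w)) (hh (inr w')) - FF (hh (inl (p (hh (inr w))))) (hh (inr w')).

Lemma main_split : charT FF = char_poly (\matrix_(i, j) Qf i j) * charT DD.
Proof. exact: (@EP_char R T W 4 p hh hb hp FF Qf Fsum). Qed.

Lemma D_off x y : pn x != pn y -> FF x y - FF (hh (inl (p x))) y = 0.
Proof.
rewrite /pn val_eqE => ne.
have hr := hp (p x); set r := hh (inl (p x)) in hr *.
have xy : (x == y) = false by apply/eqP => exy; rewrite exy eqxx in ne.
have ry : (r == y) = false by apply/eqP => exy; rewrite -exy hr eqxx in ne.
rewrite /FF xy ry /P4_join /hjoin hr (negbTE ne) /=.
by rewrite !mul0r subrr.
Qed.

Lemma charDD : charT DD =
  charT (fun w w' : {x : V1 | x != r1} => DD (inl (inl (inl w))) (inl (inl (inl w')))) *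
  charT (fun w w' : {x : V2 | x != r2} => DD (inl (inl (inr w))) (inl (inl (inr w')))) *
  charT (fun w w' : {x : V2 | x != r2} => DD (inl (inr w)) (inl (inr w'))) *
  charT (fun w w' : {x : V1 | x != r1} => DD (inr w) (inr w')).
Proof.
rewrite (charT_sum (F := DD)); last first.
  move=> x y; apply: D_off; case: y => [[y|y]|y]; rewrite /= ?pn1 ?pn2 ?pn3 ?pn4 //.
rewrite (charT_sum (F := fun x y => DD (inl x) (inl y))); last first.
  move=> x y; apply: D_off; case: y => [y|y]; rewrite /= ?pn1 ?pn2 ?pn3 ?pn4 //.
rewrite (charT_sum (F := fun x y => DD (inl (inl x)) (inl (inl y)))) //.
move=> x y; apply: D_off; rewrite /= ?pn1 ?pn2 ?pn3 ?pn4 //.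
Qed.


Lemma blk1 (w w' : {x : V1 | x != r1}) : DD (inl (inl (inl w))) (inl (inl (inl w'))) =
  ((w == w') : nat)%:R * alpha (inord 0) - s * ((G1 (val w) (val w'))%:R - (G1 r1 (val w'))%:R).
Proof.
rewrite /DD /FF /= inordK // !E_same ?pn1 //= !inlE svalE.
have -> : (r1 == sval w') = false by rewrite eq_sym; apply: negbTE (valP w').
by rewrite mul0r; ring.
Qed.

Lemma blk2 (w w' : {x : V2 | x != r2}) : DD (inl (inl (inr w))) (inl (inl (inr w'))) =
  ((w == w') : nat)%:R * alpha (inord 1) - s * ((G2 (val w) (val w'))%:R - (G2 r2 (val w'))%:R).
Proof.
rewrite /DD /FF /= inordK // !E_same ?pn2 //= ?inlE ?inrE svalE.
have -> : (r2 == sval w') = false by rewrite eq_sym; apply: negbTE (valP w').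
by rewrite mul0r; ring.
Qed.

Lemma blk3 (w w' : {x : V2 | x != r2}) : DD (inl (inr w)) (inl (inr w')) =
  ((w == w') : nat)%:R * alpha (inord 2) - s * ((G2 (val w) (val w'))%:R - (G2 r2 (val w'))%:R).
Proof.
rewrite /DD /FF /= inordK // !E_same ?pn3 //= ?inlE ?inrE svalE.
have -> : (r2 == sval w') = false by rewrite eq_sym; apply: negbTE (valP w').
by rewrite mul0r; ring.
Qed.

Lemma blk4 (w w' : {x : V1 | x != r1}) : DD (inr w) (inr w') =
  ((w == w') : nat)%:R * alpha (inord 3) - s * ((G1 (val w) (val w'))%:R - (G1 r1 (val w'))%:R).
Proof.
rewrite /DD /FF /= inordK // !E_same ?pn4 //= ?inlE ?inrE svalE.
have -> : (r1 == sval w') = false by rewrite eq_sym; apply: negbTE (valP w').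
by rewrite mul0r; ring.
Qed.


Definition A0 : R := 1 + s ^+ 2 * (d1%:R + #|V2|%:R - 1).
Definition A1 : R := 1 + s ^+ 2 * (d2%:R + (#|V1|%:R + #|V2|%:R) - 1).

Lemma alpha_val (i : 'I_4) : alpha i =
  match nat_of_ord i with 0 => A0 | 1 => A1 | 2 => A1 | _ => A0 end.
Proof.
case: i => [[|[|[|[|m]]]] hi] //;
rewrite /alpha /= !big_ord_recl big_ord0 /= /path_graph /bump /= /A0 /A1; ring.
Qed.


Definition aa : R := s ^+ 2 * (d1%:R + #|V2|%:R - 1) - s * d1%:R + 1.
Definition bb : R := s ^+ 2 * (d2%:R + (#|V1|%:R + #|V2|%:R) - 1) - s * d2%:R + 1.

Lemma Q_eq : \matrix_(i, j) Qf i j =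
  \matrix_(i < 4, j < 4) q4 aa bb (- (s * #|V1|%:R)) (- (s * #|V2|%:R)) i j.
Proof.
apply/matrixP => i j; rewrite !mxE /Qf alpha_val -val_eqE.
case: i => [[|[|[|[|m]]]] hi] //; case: j => [[|[|[|[|n]]]] hj] //;
rewrite /= /path_graph /A0 /A1 /aa /bb /=; ring.
Qed.


Lemma blkc1 : charT (fun w w' : {x : V1 | x != r1} => DD (inl (inl (inl w))) (inl (inl (inl w')))) =
  charT (fun w w' : {x : V1 | x != r1} => ((w == w') : nat)%:R * A0 -
           s * ((G1 (val w) (val w'))%:R - (G1 r1 (val w'))%:R)).
Proof. by apply: charT_ext => w w'; rewrite blk1 alpha_val inordK. Qed.

Lemma blkc2 : charT (fun w w' : {x : V2 | x != r2} => DD (inl (inl (inr w))) (inl (inl (inr w')))) =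
  charT (fun w w' : {x : V2 | x != r2} => ((w == w') : nat)%:R * A1 -
           s * ((G2 (val w) (val w'))%:R - (G2 r2 (val w'))%:R)).
Proof. by apply: charT_ext => w w'; rewrite blk2 alpha_val inordK. Qed.

Lemma blkc3 : charT (fun w w' : {x : V2 | x != r2} => DD (inl (inr w)) (inl (inr w'))) =
  charT (fun w w' : {x : V2 | x != r2} => ((w == w') : nat)%:R * A1 -
           s * ((G2 (val w) (val w'))%:R - (G2 r2 (val w'))%:R)).
Proof. by apply: charT_ext => w w'; rewrite blk3 alpha_val inordK. Qed.

Lemma blkc4 : charT (fun w w' : {x : V1 | x != r1} => DD (inr w) (inr w')) =
  charT (fun w w' : {x : V1 | x != r1} => ((w == w') : nat)%:R * A0 -
           s * ((G1 (val w) (val w'))%:R - (G1 r1 (val w'))%:R)).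
Proof. by apply: charT_ext => w w'; rewrite blk4 alpha_val inordK. Qed.

End Big.


Lemma quad (R : rcfType) (u D c : R) : 0 <= D -> u ^+ 2 - D = 4 * c ->
  ('X - ((u + Num.sqrt D) / 2)%:P) * ('X - ((u - Num.sqrt D) / 2)%:P) =
  'X^2 - u%:P * 'X + c%:P.
Proof.
move=> D0 hc.
have q2 : Num.sqrt D ^+ 2 = D by rewrite sqr_sqrtr.
have two : (2 : R) != 0 by rewrite pnatr_eq0.
have e1 : (u + Num.sqrt D) / 2 + (u - Num.sqrt D) / 2 = u by field.
have hc' : c = (u ^+ 2 - Num.sqrt D ^+ 2) / 4.
  by rewrite q2 hc; field.
have e2 : (u + Num.sqrt D) / 2 * ((u - Num.sqrt D) / 2) = c.
  by rewrite hc'; field.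
move: e1 e2; set r := (u + _) / 2; set r' := (u - _) / 2 => e1 e2.
clearbody r r'; rewrite -e1 -e2 polyCD polyCM; ring.
Qed.

Lemma rem2_perm (R : eqType) (x y : R) L : x = y ->
  perm_eq (rem y (rem y ((x :: L) ++ (x :: L)))) (L ++ L).
Proof.
move=> <- /=; rewrite eqxx.
have xin : x \in L ++ x :: L by rewrite mem_cat inE eqxx orbT.
rewrite -(perm_cons x); apply: (@perm_trans _ (L ++ x :: L)).
  by rewrite perm_sym; apply: perm_to_rem.
by rewrite -cat1s perm_catCA.
Qed.

Unset Implicit Arguments.

Theorem mainTheorem12 (R : rcfType) (V1 V2 : finType) (G1 : rel V1) (G2 : rel V2)
    (d1 d2 : nat) (lam1 lam2 : seq R) (s : R) :
  (0 < #|V1|)%N -> (0 < #|V2|)%N ->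
  simple_graph G1 -> simple_graph G2 ->
  regular G1 d1 -> regular G2 d2 ->
  spectrum_is (adjmx R G1) lam1 -> lam1`_0 = d1%:R ->
  spectrum_is (adjmx R G2) lam2 -> lam2`_0 = d2%:R ->
  let n1 : R := (#|V1|)%:R in
  let n2 : R := (#|V2|)%:R in
  let a := s ^+ 2 * (d1%:R + n2 - 1) - s * d1%:R + 1 in
  let b := s ^+ 2 * (d2%:R + (n1 + n2) - 1) - s * d2%:R + 1 in
  let sM1 := [seq s ^+ 2 * (d1%:R + n2 - 1) - s * l + 1 | l <- lam1] in
  let sM2 := [seq s ^+ 2 * (d2%:R + n1 + n2 - 1) - s * l + 1 | l <- lam2] in
  let sF4 :=
    [:: (a + b + s * n2 + Num.sqrt ((a - b - s * n2) ^+ 2 + 4 * s ^+ 2 * n1 * n2)) / 2;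
        (a + b + s * n2 - Num.sqrt ((a - b - s * n2) ^+ 2 + 4 * s ^+ 2 * n1 * n2)) / 2;
        (a + b - s * n2 + Num.sqrt ((a - b + s * n2) ^+ 2 + 4 * s ^+ 2 * n1 * n2)) / 2;
        (a + b - s * n2 - Num.sqrt ((a - b + s * n2) ^+ 2 + 4 * s ^+ 2 * n1 * n2)) / 2] in
  spectrum_is (deformed_laplacian (P4_join G1 G2) s)
    (rem a (rem a (sM1 ++ sM1)) ++ rem b (rem b (sM2 ++ sM2)) ++ sF4).
Proof.
move=> h1 h2 _ _ reg1 reg2 sp1 l10 sp2 l20.
have nonempty (V : finType) (A : 'M[R]_#|V|) l : (0 < #|V|)%N -> spectrum_is A l -> l != [::].
  move=> hV sp; apply/eqP => l0; move: sp; rewrite l0 /spectrum_is big_nil => sp.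
  by have := size_char_poly A; rewrite sp size_poly1 => -[] h; rewrite -h in hV.
case: lam1 sp1 l10 (nonempty _ _ _ h1 sp1) => [|m1 L1] sp1 l10 ne1; first by [].
case: lam2 sp2 l20 (nonempty _ _ _ h2 sp2) => [|m2 L2] sp2 l20 ne2; first by [].
rewrite /= in l10 l20; subst m1 m2.
case/card_gt0P: h1 => r1 _; case/card_gt0P: h2 => r2 _.
move=> n1 n2 a b sM1 sM2 sF4.
rewrite /spectrum_is.
have -> : char_poly (deformed_laplacian (P4_join G1 G2) s) = charT (FF G1 G2 d1 d2 s).
  by rewrite (DL s reg1 reg2).
rewrite (main_split s reg1 reg2 r1 r2) Q_eq char44 charDD.
rewrite blkc1 blkc2 blkc3 blkc4.
rewrite (block_char r1 (A0 V2 d1 s) s reg1 sp1) (block_char r2 (A1 V1 V2 d2 s) s reg2 sp2).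
set P1 := \prod_(m <- L1) _; set P2 := \prod_(m <- L2) _.
rewrite !big_cat.
have -> : \prod_(x <- rem a (rem a (sM1 ++ sM1))) ('X - x%:P) = P1 * P1.
  have pm : perm_eq (rem a (rem a (sM1 ++ sM1))) (
     [seq s ^+ 2 * (d1%:R + n2 - 1) - s * l + 1 | l <- L1] ++
     [seq s ^+ 2 * (d1%:R + n2 - 1) - s * l + 1 | l <- L1]) by apply: rem2_perm.
  rewrite (perm_big _ pm) big_cat big_map /P1; congr (_ * _);
  by apply: eq_bigr => m _; rewrite /A0 /n2; congr ('X - _%:P); ring.
have -> : \prod_(x <- rem b (rem b (sM2 ++ sM2))) ('X - x%:P) = P2 * P2.
  have pm : perm_eq (rem b (rem b (sM2 ++ sM2))) (
     [seq s ^+ 2 * (d2%:R + n1 + n2 - 1) - s * l + 1 | l <- L2] ++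
     [seq s ^+ 2 * (d2%:R + n1 + n2 - 1) - s * l + 1 | l <- L2]).
    by apply: rem2_perm; rewrite /b addrA.
  rewrite (perm_big _ pm) big_cat big_map /P2; congr (_ * _);
  by apply: eq_bigr => m _; rewrite /A1 /n1 /n2; congr ('X - _%:P); ring.
have hD1 : 0 <= (a - b - s * n2) ^+ 2 + 4 * s ^+ 2 * n1 * n2.
  apply: addr_ge0; first exact: sqr_ge0.
  apply: mulr_ge0; last exact: ler0n.
  apply: mulr_ge0; last exact: ler0n.
  by apply: mulr_ge0; [exact: ler0n | exact: sqr_ge0].
have hD2 : 0 <= (a - b + s * n2) ^+ 2 + 4 * s ^+ 2 * n1 * n2.
  apply: addr_ge0; first exact: sqr_ge0.
  apply: mulr_ge0; last exact: ler0n.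
  apply: mulr_ge0; last exact: ler0n.
  by apply: mulr_ge0; [exact: ler0n | exact: sqr_ge0].
have hF : \prod_(i <- sF4) ('X - i%:P) =
  ('X^2 - (a + b + s * n2)%:P * 'X + (a * (b + s * n2) - s * n1 * (s * n2))%:P) *
  ('X^2 - (a + b - s * n2)%:P * 'X + (a * (b - s * n2) - s * n1 * (s * n2))%:P).
  rewrite /sF4 !big_cons big_nil mulr1 mulrA.
  rewrite (quad (c := a * (b + s * n2) - s * n1 * (s * n2)) hD1); last ring.
  by rewrite (quad (c := a * (b - s * n2) - s * n1 * (s * n2)) hD2); last ring.
rewrite hF /aa /bb -/n1 -/n2 -/a -/b.
rewrite ?(polyCD, polyCM, polyCN).
rewrite /=. ring.
Qed.
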